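(* Let $T$ be a lush hedge of height $H$. Then for every integer $i\ge 2$, $$\ell_i(T)\ \ge\ 2\sum_{j=i+1}^{H+1}\ell_j(T).$$
   Context: A rooted tree is a finite tree with a distinguished vertex, the root. If $y,z$ are adjacent and the path from the root to $y$ passes through $z$, then $y$ is a child of $z$. In a rooted tree with at least two vertices a leaf is a non-root vertex of degree $1$; in the one-vertex tree $P_1$ the single vertex is both root and leaf. A hedge is a rooted tree which is either $P_1$ or in which all leaves have the same distance to the root. The height $\mathrm{h}(u)$ of a vertex $u$ of a hedge is its distance to a nearest leaf, and the height $H$ of the hedge is the height of its root. $V_i(T)$ denotes the set of vertices of height $i$, and for $i\ge1$, $\ell_i(T):=|V_{i-1}(T)|-|V_i(T)|$ (so $\ell_{H+1}(T)=1$ and $\ell_i(T)=0$ for $i>H+1$). A hedge is lush if every vertex of height at least $2$ has at least three children and every vertex of height $1$ has at least two children. *)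

(* Defs.v *)
From mathcomp Require Import all_boot all_order all_algebra.
Set Implicit Arguments. Unset Strict Implicit. Unset Printing Implicit Defensive.

(* A finite rooted tree, represented (up to isomorphism) as a rose tree:
   a node together with the list of subtrees rooted at its children. *)
Inductive rtree : Type := Node of seq rtree.

Definition children (t : rtree) : seq rtree := let: Node cs := t in cs.

(* All vertices of t, each represented by the subtree rooted at it
   (one list entry per vertex). *)
Fixpoint nodes (t : rtree) : seq rtree :=
  let: Node cs := t in t :: flatten (map nodes cs).

(* Depths of the leaves of t (a leaf is a childless vertex; the root has a
   child unless t = P_1, in which case the root is the unique leaf). *)
Fixpoint leaf_depths (t : rtree) : seq nat :=
  match t with
  | Node [::] => [:: 0]
  | Node cs => map S (flatten (map leaf_depths cs))
  end.

Definition is_hedge (t : rtree) : bool := constant (leaf_depths t).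

Fixpoint hgt (t : rtree) : nat :=
  match t with
  | Node (c :: cs) => (foldr minn (hgt c) (map hgt cs)).+1
  | Node [::] => 0
  end.

Definition Vcard (t : rtree) (i : nat) : nat :=
  count (fun s => hgt s == i) (nodes t).

Definition ell (t : rtree) (i : nat) : int :=
  (Vcard t i.-1)%:Z - (Vcard t i)%:Z.

Definition lush (t : rtree) : bool :=
  all (fun s => ((2 <= hgt s) ==> (3 <= size (children s)))
             && ((hgt s == 1) ==> (2 <= size (children s)))) (nodes t).

(* Main.v *)
Require Import Defs.
From mathcomp Require Import all_boot all_order all_algebra.
From mathcomp Require Import zify.
Import GRing.Theory Num.Theory.

Fixpoint allP (P : rtree -> Prop) (cs : seq rtree) : Prop :=
  if cs is c :: cs' then P c /\ allP P cs' else True.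

Fixpoint rt_ind (P : rtree -> Prop)
  (H : forall cs, allP P cs -> P (Node cs)) (t : rtree) : P t :=
  match t with
  | Node cs => H cs ((fix f (cs : seq rtree) : allP P cs :=
        match cs return allP P cs with [::] => I | c :: cs' => conj (@rt_ind P H c) (f cs') end) cs)
  end.

Fixpoint bal (h : nat) (t : rtree) : bool :=
  match t with
  | Node cs => if cs is [::] then h == 0 else (h != 0) && all (bal h.-1) cs
  end.

Lemma all_flat (T : Type) (a : pred T) (ss : seq (seq T)) :
  all a (flatten ss) = all (all a) ss.
Proof. by elim: ss => //= s ss IH; rewrite all_cat IH. Qed.

Lemma ld_ne t : leaf_depths t != [::].
Proof.
elim/rt_ind: t => [[|c cs]] //= [Hc _].
by case: (leaf_depths c) Hc.
Qed.

Lemma gen_aux e (cs : seq rtree) :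
  all (preim leaf_depths (all (pred1 e))) cs ->
  allP (fun c => forall d, all (pred1 d) (leaf_depths c) -> bal d c) cs ->
  all (bal e) cs.
Proof.
elim: cs => //= c cs IHl /andP [H1 H2] [Hc Hcs].
by rewrite Hc // IHl.
Qed.

Lemma bal_ld t d : all (pred1 d) (leaf_depths t) -> bal d t.
Proof.
elim/rt_ind: t d => [[|c cs]] IH d.
  by rewrite /= andbT => /eqP ->.
move=> H.
have Hd : d != 0.
  move: H; rewrite /= -/(leaf_depths c).
  by case E: (leaf_depths c) (ld_ne c) => [|x xs] //= _ /andP [/eqP <-].
have H' : all (all (pred1 d.-1)) (map leaf_depths (c :: cs)).
  rewrite -all_flat; move: H; rewrite [leaf_depths _]/= -/(leaf_depths c).
  rewrite all_map; apply: sub_all => x /= /eqP <-; by rewrite eqxx.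
rewrite [bal _ _]/= Hd /=; move: H' IH.
rewrite all_map; exact: gen_aux.
Qed.

Lemma Vcard_node cs i :
  Vcard (Node cs) i = (hgt (Node cs) == i) + sumn (map (fun c => Vcard c i) cs).
Proof. by rewrite /Vcard /= count_flatten -map_comp. Qed.

Lemma allP_mono (P Q : rtree -> Prop) cs :
  (forall c, P c -> Q c) -> allP P cs -> allP Q cs.
Proof. by move=> H; elim: cs => //= c cs IH [] /H ? /IH. Qed.

Lemma sumn_le3 (f g : rtree -> nat) cs :
  allP (fun c => 3 * f c <= g c)%N cs ->
  (3 * sumn (map f cs) <= sumn (map g cs))%N.
Proof. elim: cs => //= c cs IH [H1 /IH H2]; lia. Qed.

Lemma sumn_0 (f : rtree -> nat) cs :
  allP (fun c => f c = 0)%N cs -> sumn (map f cs) = 0%N.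
Proof. elim: cs => //= c cs IH [-> /IH ->]; done. Qed.

Lemma sumn_ge (f : rtree -> nat) cs :
  allP (fun c => 0 < f c)%N cs -> (size cs <= sumn (map f cs))%N.
Proof. elim: cs => //= c cs IH [H1 /IH H2]; lia. Qed.

Lemma foldr_min cs h :
  allP (fun c => hgt c = h) cs -> foldr minn h (map hgt cs) = h.
Proof. elim: cs => //= c cs IH [-> /IH ->]; by rewrite minnn. Qed.

Definition KeyP t := forall h, bal h t -> lush t ->
  hgt t = h /\ (forall i, (h < i)%N -> Vcard t i = 0%N) /\ (0 < Vcard t h)%N /\
  forall i, (1 < i)%N -> (3 * Vcard t i <= Vcard t i.-1)%N.

Lemma ch_aux h (cs : seq rtree) : allP KeyP cs -> all (bal h) cs -> all lush cs ->
  allP (fun c' => hgt c' = h /\ (forall i, (h < i)%N -> Vcard c' i = 0%N)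
   /\ (0 < Vcard c' h)%N /\
   forall i, (1 < i)%N -> (3 * Vcard c' i <= Vcard c' i.-1)%N) cs.
Proof.
elim: cs => //= c cs IHl [Hc Hcs] /andP [Hb1 Hb2] /andP [Hl1 Hl2].
split; [exact: Hc | exact: IHl].
Qed.

Lemma key t : KeyP t.
Proof.
elim/rt_ind: t => cs IH h.
case: cs IH => [|c cs] IH.
  move=> /= /eqP -> _; split => //; split.
    by move=> [|i] //; rewrite /Vcard.
  split; first by rewrite /Vcard.
  by move=> [|[|i]] //; rewrite /Vcard.
move=> Hb Hl.
move: Hb; rewrite [bal _ _]/= => /andP [Hh0 Hb].
have Hl' : lush c && all lush cs /\
   (2 <= hgt (Node (c :: cs)))%N ==> (3 <= (size cs).+1)%N.
  move: Hl; rewrite /lush [nodes _]/= /= -/(nodes c) all_cat all_flat all_map.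
  move=> /and3P [/andP [H1 _] H2 H3]; split => //.
  by rewrite H2.
have [Hlc Hroot] := Hl'.
have Hch : allP (fun c' => hgt c' = h.-1 /\ (forall i, (h.-1 < i)%N -> Vcard c' i = 0%N)
   /\ (0 < Vcard c' h.-1)%N /\
   forall i, (1 < i)%N -> (3 * Vcard c' i <= Vcard c' i.-1)%N) (c :: cs).
  exact: ch_aux.
have Hhgt : hgt (Node (c :: cs)) = h.
  have [[Hc _] Hcs] := Hch.
  rewrite /= Hc foldr_min; first by lia.
  by apply: allP_mono Hcs => x [].
split => //; split.
  move=> i Hi; rewrite Vcard_node Hhgt.
  have -> : (h == i) = false by apply/eqP; lia.
  rewrite sumn_0 //; apply: allP_mono Hch => x [_ [Hx _]]; apply: Hx; lia.
split.
  rewrite Vcard_node Hhgt eqxx; lia.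
move=> i Hi; rewrite !Vcard_node Hhgt.
have Hi3 : allP (fun x => 3 * Vcard x i <= Vcard x i.-1)%N (c :: cs).
  by apply: allP_mono Hch => x [_ [_ [_ Hx]]]; exact: Hx.
have H3 := @sumn_le3 (fun c => Vcard c i) (fun c => Vcard c i.-1) _
   Hi3.
case: (eqVneq h i) => Hhi.
  subst i.
  rewrite sumn_0; last first.
    apply: allP_mono Hch => x [_ [Hx _]]; apply: Hx; lia.
  have Hp : allP (fun x => 0 < Vcard x h.-1)%N (c :: cs).
    by apply: allP_mono Hch => x [_ [_ [Hx _]]].
  have Hs := @sumn_ge (fun c => Vcard c h.-1) _
     Hp.
  move: Hroot; rewrite Hhgt Hi /= => Hroot.
  move: Hs Hroot; rewrite /=; lia.
lia.
Qed.

Local Open Scope ring_scope.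

Lemma tele T i k :
  \sum_(i.+1 <= j < i.+1 + k) ell T j = (Vcard T i)%:Z - (Vcard T (i + k))%:Z.
Proof.
elim: k => [|k IH].
  by rewrite !addn0 big_geq // subrr.
rewrite addnS big_nat_recr /=; last by lia.
by rewrite IH /ell addnS /= addSn addrA subrK.
Qed.

Theorem mainTheorem1 (T : rtree) :
  is_hedge T -> lush T ->
  forall i : nat, (2 <= i)%N ->
    2%:R * (\sum_(i.+1 <= j < (hgt T).+2) ell T j) <= ell T i.
Proof.
move=> Hh Hl i Hi.
have Hb : bal (hgt T) T.
  move: Hh; rewrite /is_hedge.
  case E: (leaf_depths T) (ld_ne T) => [|d ds] // _ Hc.
  have Hb : bal d T by apply: bal_ld; by move: Hc; rewrite E /= eqxx.
  by have [-> _] := key T _ Hb Hl.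
have [_ [_ [_ H3]]] := key T _ Hb Hl.
have := H3 i Hi => {}H3.
case: (leqP i.+1 (hgt T).+2) => Hle.
  have -> : (((hgt T).+2) = i.+1 + ((hgt T).+2 - i.+1))%N by lia.
  rewrite tele /ell; lia.
rewrite big_geq; last by lia.
rewrite /ell; lia.
Qed.
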